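(* The group $Fr(162\times 4)$ is not isomorphic to any group $C(n,a,b)$ ($n$ a positive integer, $a,b$ integers).
   Context: For a positive integer $n$ and integers $a,b$, let $\eta=e^{2i\pi/n}$, $F(n,a,b)=\mathrm{diag}(\eta^a,\eta^b,\eta^{-a-b})$, $E=\begin{pmatrix}0&1&0\\0&0&1\\1&0&0\end{pmatrix}$, and $C(n,a,b)=\langle F(n,a,b),E\rangle\subset SU(3)$. Let $\omega=e^{2i\pi/3}$, $J$ the antidiagonal matrix with antidiagonal entries $1$, $G_1=\mathrm{diag}(e^{7i\pi/9},-e^{4i\pi/9},-e^{7i\pi/9})$, $G_2=\begin{pmatrix}-\tfrac12 e^{4i\pi/9}&\tfrac{1}{\sqrt2}e^{7i\pi/9}&\tfrac12 e^{4i\pi/9}\\ \tfrac{1}{\sqrt2}e^{7i\pi/9}&0&\tfrac{1}{\sqrt2}e^{7i\pi/9}\\ \tfrac12 e^{4i\pi/9}&\tfrac{1}{\sqrt2}e^{7i\pi/9}&-\tfrac12 e^{4i\pi/9}\end{pmatrix}$, $FUM=-\omega J$, $Fr(162\times 4)=\langle G_1,G_2,FUM\rangle$. *)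

(* Defs.v *)
From HB Require Import structures.
From mathcomp Require Import all_boot all_order all_algebra all_field.
Set Implicit Arguments. Unset Strict Implicit. Unset Printing Implicit Defensive.
Import Order.TTheory GRing.Theory Num.Theory.
Local Open Scope ring_scope.

Notation M3 := 'M[algC]_3.

(* e^{i pi / m}: the m-th root of -1 with maximal real part among those with
   nonnegative imaginary part (see rootC_Re_max). *)
Definition epi (m : nat) : algC := m.-root (-1).

Definition eta_ (n : nat) : algC := epi n ^+ 2.

Definition diag3 (x y z : algC) : M3 :=
  \matrix_(i < 3, j < 3)
    (if i == j then (if val i == 0%N then x else if val i == 1%N then y else z)
     else 0).

Definition mx3 (a00 a01 a02 a10 a11 a12 a20 a21 a22 : algC) : M3 :=
  \matrix_(i < 3, j < 3)
    (match val i, val j with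
     | 0, 0 => a00 | 0, 1 => a01 | 0, _ => a02
     | 1, 0 => a10 | 1, 1 => a11 | 1, _ => a12
     | _, 0 => a20 | _, 1 => a21 | _, _ => a22 end)%N.

Definition Fmx (n : nat) (a b : int) : M3 :=
  diag3 (eta_ n ^ a) (eta_ n ^ b) (eta_ n ^ (- a - b)).

Definition Emx : M3 := mx3 0 1 0  0 0 1  1 0 0.

Inductive gen_group (gens : seq M3) : M3 -> Prop :=
  | gen_one : gen_group gens 1%:M
  | gen_base g : g \in gens -> gen_group gens g
  | gen_mul x y : gen_group gens x -> gen_group gens y -> gen_group gens (x *m y)
  | gen_inv x : gen_group gens x -> gen_group gens (invmx x).

Definition Cgrp (n : nat) (a b : int) : M3 -> Prop :=
  gen_group [:: Fmx n a b; Emx].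

Definition omega : algC := epi 3 ^+ 2.
Definition Jmx : M3 := mx3 0 0 1  0 1 0  1 0 0.
Definition e79 : algC := epi 9 ^+ 7.
Definition e49 : algC := epi 9 ^+ 4.
Definition isq2 : algC := (sqrtC 2)^-1.
Definition G1 : M3 := diag3 e79 (- e49) (- e79).
Definition G2 : M3 :=
  mx3 (- (2^-1 * e49)) (isq2 * e79) (2^-1 * e49)
      (isq2 * e79)     0            (isq2 * e79)
      (2^-1 * e49)     (isq2 * e79) (- (2^-1 * e49)).
Definition FUM : M3 := - (omega *: Jmx).

Definition Fr162x4 : M3 -> Prop := gen_group [:: G1; G2; FUM].

Definition grp_isomorphic (P Q : M3 -> Prop) : Prop :=
  exists f : M3 -> M3,
    [/\ forall x, P x -> Q (f x),
        forall x y, P x -> P y -> f x = f y -> x = y,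
        forall y, Q y -> exists2 x, P x & f x = y
      & forall x y, P x -> P y -> f (x *m y) = f x *m f y].

(* Main.v *)
Require Import Defs.
From HB Require Import structures.
From mathcomp Require Import all_boot all_order all_algebra all_field.
From mathcomp Require Import ring.
Import GRing.Theory Num.Theory.
Local Open Scope ring_scope.

Ltac mxcomp := apply/matrixP; case=> [[|[|[|?]]] ?] //; case=> [[|[|[|?]]] ?] //;
  do 3 (rewrite ?mxE ?big_ord_recr ?big_ord0 /= ?mxE); rewrite -?val_eqE /=; try ring.

Lemma mulD x y z u v w : diag3 x y z *m diag3 u v w = diag3 (x*u) (y*v) (z*w).
Proof. mxcomp. Qed.
Lemma swapE x y z : Emx *m diag3 x y z = diag3 y z x *m Emx.
Proof. mxcomp. Qed.
Lemma E3 : Emx *m (Emx *m Emx) = 1%:M.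
Proof. mxcomp. Qed.
Lemma diag1 : diag3 1 1 1 = 1%:M.
Proof. mxcomp. Qed.
Lemma swapJ x y z : Jmx *m diag3 x y z = diag3 z y x *m Jmx.
Proof. mxcomp. Qed.
Lemma FUMd : FUM = diag3 (- omega) (- omega) (- omega) *m Jmx.
Proof. rewrite /FUM. mxcomp. Qed.
Lemma entry02 a b c : (diag3 a b c *m Jmx) 0 2 = a.
Proof. rewrite !mxE !big_ord_recr big_ord0 /= !mxE /=. ring. Qed.

Fixpoint Ep (k : nat) : M3 := if k is k'.+1 then Emx *m Ep k' else 1%:M.

Lemma EpD k l : Ep (k + l) = Ep k *m Ep l.
Proof. elim: k => [|k IH] /=; first by rewrite mul1mx. by rewrite IH mulmxA. Qed.

Lemma Ep3 k : Ep (k + k + k) = 1%:M.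
Proof.
have -> : (k + k + k = 3 * k)%N by rewrite mulSn mul2n -addnn addnA addnC addnA.
elim: k => [|k IH] //. by rewrite mulnS EpD IH mulmx1 /= mulmx1 E3.
Qed.

Definition Dg (D : M3) := exists x y z, [/\ x != 0, y != 0, z != 0 & D = diag3 x y z].

Lemma swapEp k D : Dg D -> exists2 D', Dg D' & Ep k *m D = D' *m Ep k.
Proof.
elim: k D => [|k IH] D hD /=; first by exists D => //; rewrite mul1mx mulmx1.
have [D1 [x [y [z [hx hy hz ->]]]] e1] : exists2 D1, Dg D1 & Ep k *m D = D1 *m Ep k by exact: IH.
exists (diag3 y z x); first by exists y, z, x.
by rewrite -mulmxA e1 mulmxA swapE mulmxA.
Qed.

Lemma DgM D1 D2 : Dg D1 -> Dg D2 -> Dg (D1 *m D2).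
Proof.
move=> [x [y [z [hx hy hz ->]]]] [u [v [w [hu hv hw ->]]]].
exists (x*u), (y*v), (z*w); split; rewrite ?mulf_neq0 //; exact: mulD.
Qed.

Lemma DgC D1 D2 : Dg D1 -> Dg D2 -> D1 *m D2 = D2 *m D1.
Proof.
move=> [x [y [z [hx hy hz ->]]]] [u [v [w [hu hv hw ->]]]].
by rewrite !mulD (mulrC x) (mulrC y) (mulrC z).
Qed.

Definition Cfk k M := exists2 D, Dg D & M = D *m Ep k.

Lemma CfkM k l M N : Cfk k M -> Cfk l N -> Cfk (k + l) (M *m N).
Proof.
move=> [D hD ->] [D2 hD2 ->].
have [D3 hD3 e] := @swapEp k D2 hD2.
exists (D *m D3); first exact: DgM.
by rewrite EpD -!mulmxA (mulmxA (Ep k)) e -!mulmxA.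
Qed.

Lemma CfkV k M : Cfk k M -> Cfk (k + k) (invmx M).
Proof.
move=> [D [x [y [z [hx hy hz eD]]]] ->].
set Di := diag3 x^-1 y^-1 z^-1.
have hDi : Dg Di by exists x^-1, y^-1, z^-1; split; rewrite ?invr_eq0.
have e1 : D *m Ep k *m (Ep (k + k) *m Di) = 1%:M.
  rewrite -mulmxA (mulmxA (Ep k)) -EpD addnA Ep3 mul1mx eD mulD !mulfV //.
  exact: diag1.
have [hu _] := mulmx1_unit e1.
have -> : invmx (D *m Ep k) = Ep (k + k) *m Di.
  by rewrite -[invmx _]mulmx1 -e1 (mulmxA (invmx _) (D *m Ep k)) mulVmx // mul1mx.
have [D' hD' ->] := @swapEp (k + k) Di hDi.
by exists D'.
Qed.

Lemma Cgrp_form n a b M : (0 < n)%N -> Cgrp n a b M -> exists k, Cfk k M.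
Proof.
move=> n0; elim => [| g | x y _ [k hx] _ [l hy] | x _ [k hx]].
- exists 0%N, 1%:M; last by rewrite mulmx1.
  by exists 1, 1, 1; split; rewrite ?oner_eq0 // diag1.
- rewrite !inE => /orP [/eqP -> | /eqP ->].
  + exists 0%N; exists (Fmx n a b); last by rewrite /= mulmx1.
    have epi0 : epi n != 0.
      apply/eqP => e0; have := rootCK n0 (-1 : algC).
      rewrite -/(epi n) e0 expr0n gtn_eqF // => /eqP; by rewrite eq_sym oppr_eq0 oner_eq0.
    have et0 : eta_ n != 0 by rewrite /eta_ expf_neq0.
    by exists (eta_ n ^ a), (eta_ n ^ b), (eta_ n ^ (- a - b)); split; rewrite ?expfz_neq0.
  + exists 1%N, (diag3 1 1 1); first by exists 1, 1, 1; split; rewrite ?oner_eq0.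
    by rewrite diag1 mul1mx /= mulmx1.
- by exists (k + l)%N; exact: CfkM.
- by exists (k + k)%N; exact: CfkV.
Qed.

Arguments Cgrp_form {n a b M}.

Arguments CfkM {k l M N}.

Definition cube (M : M3) := M *m M *m M.

Lemma Cgrp_cubes n a b x y : (0 < n)%N -> Cgrp n a b x -> Cgrp n a b y ->
  cube x *m cube y = cube y *m cube x.
Proof.
move=> n0 /(Cgrp_form n0) [k hx] /(Cgrp_form n0) [l hy].
have dg : forall k M, Cfk k M -> Dg (cube M).
  move=> j M hM; have [D hD e] := CfkM (CfkM hM hM) hM.
  by rewrite /cube e Ep3 mulmx1.
by apply: DgC; apply: dg; eauto.
Qed.

Lemma epi_neq0 m : (0 < m)%N -> epi m != 0.
Proof.
move=> m0; apply/eqP => e0; have := rootCK m0 (-1 : algC).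
rewrite -/(epi m) e0 expr0n gtn_eqF // => /eqP; by rewrite eq_sym oppr_eq0 oner_eq0.
Qed.

Lemma JJ : Jmx *m Jmx = 1%:M.
Proof. mxcomp. Qed.

Lemma noncomm : cube G1 *m cube FUM != cube FUM *m cube G1.
Proof.
set c := - omega.
have cF : cube FUM = diag3 (c*c*c) (c*c*c) (c*c*c) *m Jmx.
  rewrite /cube /FUM /c; mxcomp.
have cG : cube G1 = diag3 (e79*e79*e79) (-e49 * -e49 * -e49) (-e79 * -e79 * -e79).
  by rewrite /cube /G1 !mulD.
rewrite cF cG mulmxA mulD -mulmxA swapJ mulmxA mulD.
apply/eqP => /(congr1 (fun M : M3 => M 0 2)); rewrite !entry02 => H.
have h2 : (e79 * e79 * e79 * (c * c * c)) *+ 2 = 0.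
  by rewrite mulr2n {2}H; ring.
move/eqP: h2; rewrite mulrn_eq0 /= !mulf_eq0 /c oppr_eq0 /omega /e79 !expf_eq0 /=.
by rewrite (negbTE (epi_neq0 9 isT)) (negbTE (epi_neq0 3 isT)).
Qed.

Theorem theorem11 (n : nat) (a b : int) :
  (0 < n)%N -> ~ grp_isomorphic Fr162x4 (Cgrp n a b).
Proof.
move=> n0 [f [hP hinj hsurj hmul]].
have FG1 : Fr162x4 G1 by apply: gen_base; rewrite !inE eqxx.
have FFUM : Fr162x4 FUM by apply: gen_base; rewrite !inE eqxx !orbT.
have Fc : forall x, Fr162x4 x -> Fr162x4 (cube x) by move=> x hx; rewrite /cube; apply: gen_mul => //; apply: gen_mul.
have hc : forall x, Fr162x4 x -> f (cube x) = cube (f x).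
  by move=> x hx; rewrite /cube !hmul //; apply: gen_mul.
move/negP: noncomm; apply; apply/eqP; apply: hinj; try apply: gen_mul; try exact: Fc.
rewrite (hmul _ _ (Fc _ FG1) (Fc _ FFUM)) (hmul _ _ (Fc _ FFUM) (Fc _ FG1)) !hc //; exact: Cgrp_cubes n0 (hP _ FG1) (hP _ FFUM).
Qed.
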